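(* Let $k\ge2$ and $r\ge1$. Let $X$ be a mixed-stable sequence with respect to the $(k,r)$-tree $T_r$ that is a whole multiple of its atomic sequence. Then there is a BST $T'$ on the keys of $T_r$ such that the average promotion of $T_r$ to $T'$ with respect to $X$ is strictly larger than $k(1-\alpha^r)$, where $\alpha=1-3^{-k}$. If $X$ is strongly-stable, then there is a BST $T'$ on the keys of $T_r$ such that the average promotion of $T_r$ to $T'$ equals $(k+1)(1-\alpha^r)+\delta$, where $\alpha=1-2^{-k}$ and $0\le\delta<\alpha^r$.
   Context: $(k,r)$-trees. Let $k\ge2$ and $r\ge0$ be integers. $T_0$ is a single node. For $r\ge1$, $T_r$ has $k$ trunk nodes $w_1,\dots,w_k$: $w_1$ is the root, $w_2$ is the right child of $w_1$, and $w_{j+1}$ is the left child of $w_j$ for $2\le j\le k-1$. The left child of $w_k$ is a single leaf (the actual leaf). Each of the remaining $k$ child positions of trunk nodes (the left child of $w_1$ and the right child of $w_j$ for $2\le j\le k$) is the root of a copy of $T_{r-1}$. Keys are $1,\dots,|T_r|$ in symmetric order. Stable sequences. Let $T$ be a full binary search tree (every inner node has exactly two children), and let $X$ be a query sequence consisting only of keys stored at leaves of $T$. For an inner node $v$, let $X_v$ be the subsequence of $X$ consisting of the queries to keys in the subtree of $v$. - The node $v$ is strongly-stable if consecutive queries of $X_v$ alternate between the left and right subtrees of $v$. - The node $v$ is weakly-stable with a left bias if its left child $u$ is an inner node and $X_v$ repeats cyclically (from some starting phase) the pattern: a query in the left subtree of $u$, then one in the right subtree of $u$, then one in the right subtree of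 $v$. - Weakly-stable with a right bias is the mirror image: $u$ is the right child of $v$, and the pattern is right subtree of $u$, left subtree of $u$, left subtree of $v$. In both weakly-stable cases $u$ is called the favored child of $v$. $X$ (and $T$) is mixed-stable if every inner node of $T$ is strongly-stable or weakly-stable, and strongly-stable if every inner node is strongly-stable. The atomic sequence is the shortest such stable sequence all of whose repetitions are again such stable sequences. $X$ is a whole multiple of it if it is a concatenation of copies of it. For such $X$, $f(x)$ is the fraction of queries equal to $x$. Promotion. For BSTs $T,T'$ on the same keys and such $X$, the average promotion of $T$ to $T'$ is $\sum_x f(x)\,(d_T(x)-d_{T'}(x))$, where $d_T(x)$ is the number of edges from the root of $T$ to $x$. *)

(* Defs.v *)
From mathcomp Require Import all_boot all_order all_algebra.
Set Implicit Arguments. Unset Strict Implicit. Unset Printing Implicit Defensive.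
Import Order.TTheory GRing.Theory Num.Theory.

(* Binary trees; keys are 1..tree_size t in symmetric (in-order) order.
   A node with two empty children (N E E) is a leaf; a node N l r with
   both l and r nonempty is an inner node. *)
Inductive tree := E | N of tree & tree.

Fixpoint tree_size (t : tree) : nat :=
  match t with E => 0 | N l r => (tree_size l + tree_size r).+1 end.

Definition nonempty (t : tree) : bool := if t is N _ _ then true else false.
Definition inner (l r : tree) : bool := nonempty l && nonempty r.
Definition is_inner (t : tree) : bool :=
  if t is N l r then inner l r else false.

Fixpoint depth (t : tree) (x : nat) : nat :=
  match t with
  | E => 0
  | N l r => let v := (tree_size l).+1 in
      if x == v then 0
      else if x < v then (depth l x).+1 else (depth r (x - v)).+1
  end.

Definition leaf : tree := N E E.
Fixpoint trunk (T : tree) (n : nat) : tree :=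
  match n with 0 => leaf | n'.+1 => N (trunk T n') T end.
(* w_1 = root with left child T_{r-1} and right child w_2;
   w_2..w_k is trunk T_{r-1} (k-1). *)
Fixpoint krtree (k r : nat) : tree :=
  match r with
  | 0 => leaf
  | r'.+1 => N (krtree k r') (trunk (krtree k r') k.-1)
  end.

Fixpoint leaf_key (t : tree) (o x : nat) : bool :=
  match t with
  | E => false
  | N l r => if nonempty l || nonempty r then
               leaf_key l o x || leaf_key r (o + tree_size l).+1 x
             else x == o.+1
  end.

Fixpoint all_nodes (Q : tree -> tree -> nat -> Prop) (t : tree) (o : nat) : Prop :=
  match t with
  | E => True
  | N l r => Q l r o /\ all_nodes Q l o /\ all_nodes Q r (o + tree_size l).+1
  end.

Definition sub_seq (l r : tree) (o : nat) (X : seq nat) : seq nat :=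
  [seq x <- X | (o < x) && (x <= o + (tree_size l + tree_size r).+1)].

(* consecutive queries alternate between left and right subtree *)
Definition strong_node (l r : tree) (o : nat) (X : seq nat) : Prop :=
  sorted (fun a b : bool => a != b) [seq x <= o + tree_size l | x <- sub_seq l r o X].

Definition cyclic3 (lab : nat -> nat) (s : seq nat) : Prop :=
  exists2 p, p < 3 & forall i, i < size s -> lab (nth 0 s i) = (i + p) %% 3.

(* weakly-stable with left bias: favored child u = l = N ll lr inner;
   pattern: left of u (0), right of u (1), right of v (2) *)
Definition weak_left_node (l r : tree) (o : nat) (X : seq nat) : Prop :=
  match l with
  | E => False
  | N ll lr => inner ll lr /\
      cyclic3 (fun x => if x <= o + tree_size ll then 0
                        else if x <= o + tree_size l then 1 else 2)
              (sub_seq l r o X)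
  end.

(* weakly-stable with right bias: favored child u = r = N rl rr inner;
   pattern: right of u (0), left of u (1), left of v (2) *)
Definition weak_right_node (l r : tree) (o : nat) (X : seq nat) : Prop :=
  match r with
  | E => False
  | N rl rr => inner rl rr /\
      let v := (o + tree_size l).+1 in
      cyclic3 (fun x => if x > v + (tree_size rl).+1 then 0
                        else if x > v then 1 else 2)
              (sub_seq l r o X)
  end.

Definition only_leaf_queries (T : tree) (X : seq nat) : Prop :=
  all (leaf_key T 0) X.

Definition strongly_stable (T : tree) (X : seq nat) : Prop :=
  only_leaf_queries T X /\
  all_nodes (fun l r o => inner l r -> strong_node l r o X) T 0.

Definition mixed_stable (T : tree) (X : seq nat) : Prop :=
  only_leaf_queries T X /\
  all_nodes (fun l r o => inner l r ->
     strong_node l r o X \/ weak_left_node l r o X \/ weak_right_node l r o X) T 0.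

Definition rep (A : seq nat) (j : nat) : seq nat := flatten (nseq j A).

(* A is the atomic sequence of X w.r.t. the stability notion S: the shortest
   nonempty sequence all of whose repetitions are S-stable and whose
   repetitions X follows (X is a prefix of some repetition of A). *)
Definition atomic (S : seq nat -> Prop) (X A : seq nat) : Prop :=
  [/\ 0 < size A,
      (forall j, 0 < j -> S (rep A j)),
      (exists j, prefix X (rep A j)) &
      (forall B, 0 < size B -> (forall j, 0 < j -> S (rep B j)) ->
         (exists j, prefix X (rep B j)) -> size A <= size B)].

Definition whole_multiple_of_atomic (S : seq nat -> Prop) (X : seq nat) : Prop :=
  exists A m, [/\ atomic S X A, 0 < m & X = rep A m].

Local Open Scope ring_scope.

Definition freq (X : seq nat) (x : nat) : rat := (count_mem x X)%:R / (size X)%:R.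

Definition avg_promotion (T T' : tree) (X : seq nat) : rat :=
  \sum_(1 <= x < (tree_size T).+1)
     freq X x * ((depth T x)%:R - (depth T' x)%:R).

(* Main.v *)
Require Import Defs.
From mathcomp Require Import all_boot all_order all_algebra zify ring lra.
Import Order.TTheory GRing.Theory Num.Theory.

Lemma count_split (T : Type) (p q : pred T) s :
  count p s = count (fun x => p x && q x) s + count (fun x => p x && ~~ q x) s.
Proof. elim: s => //= x s ->; case: (p x); case: (q x) => /=; lia. Qed.

Definition cI (a n : nat) (Y : seq nat) := count (fun y => (a < y) && (y <= a + n)) Y.

Lemma cI_split a n1 n2 Y : cI a (n1 + n2) Y = cI a n1 Y + cI (a + n1) n2 Y.
Proof.
rewrite /cI (@count_split nat (fun y => (a < y) && (y <= a + (n1 + n2))) (fun y => y <= a + n1)).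
congr (_ + _); apply: eq_count => y /=; lia.
Qed.

Lemma cI1 a Y : cI a 1 Y = count_mem a.+1 Y.
Proof. rewrite /cI; apply: eq_count => y /=; lia. Qed.

Lemma count_rep (P : pred nat) A m : count P (rep A m) = m * count P A.
Proof. elim: m => //= m IH; rewrite /rep /= count_cat -/(rep A m) IH; lia. Qed.

Lemma rep2 A : rep A 2 = A ++ A.
Proof. by rewrite /rep /= cats0. Qed.

Lemma leaf_range t o x : leaf_key t o x -> (o < x) && (x <= o + tree_size t).
Proof.
elim: t o => //= l IHl r IHr o.
case: ifP => [_ /orP [/IHl | /IHr] | ]; try lia.
Qed.

Lemma leaf_key_N l r o x : nonempty l || nonempty r ->
  leaf_key (N l r) o x = leaf_key l o x || leaf_key r (o + tree_size l).+1 x.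
Proof. by move=> /= ->. Qed.

Lemma root_notin t o (X : seq nat) :
  (forall x, x \in X -> [|| leaf_key t o x, x <= o | o + tree_size t < x]) ->
  all_nodes (fun l r o' => inner l r -> count_mem (o' + tree_size l).+1 X = 0) t o.
Proof.
elim: t o => // l IHl r IHr o H; split; [|split].
- move=> /andP [nl nr]; apply/count_memPn/negP => /H.
  rewrite leaf_key_N ?nl // => /orP [/orP [/leaf_range|/leaf_range]|] /=; lia.
- case: l IHl H => [|ll lr] IHl H; first by [].
  apply: IHl => x /H; rewrite leaf_key_N //.
  case/orP => [/orP [-> //|/leaf_range /= h]| /= h]; apply/orP; right; lia.
- case: r IHr H => [|rl rr] IHr H; first by [].
  apply: IHr => x /H; rewrite leaf_key_N ?orbT //.
  case/orP => [/orP [/leaf_range /= h|-> //]| /= h]; apply/orP; right; lia.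
Qed.

Lemma alt_aux n : forall (x : bool) s, size s <= n ->
  path (fun a c : bool => a != c) x s -> last x s != x ->
  count id (x :: s) = count negb (x :: s).
Proof.
elim: n => [|n IH] x [|y [|z s]] //=; try lia.
move=> hs /and3P [xy yz pz] hl.
have zx : z = x by move: xy yz; case: (x); case: (y); case: (z).
move: pz hl; rewrite zx => pz hl. have /= := IH x s ltac:(lia) pz hl.
clear -xy; move: xy; case: (x); case: (y) => //= _ h; lia.
Qed.

Lemma alt_cnt (b : seq bool) :
  sorted (fun a c : bool => a != c) (b ++ b) -> count id b = count negb b.
Proof.
case: b => // x s /=; rewrite cat_path => /andP [p1 /= /andP [h _]].
exact: alt_aux (leqnn _) p1 h.
Qed.

Lemma cnt_iota3 q p j : p < 3 -> j < 3 ->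
  count (fun i => (i + p) %% 3 == j) (iota 0 (3 * q)) = q.
Proof.
move=> hp hj; elim: q => [|q IH]; first by rewrite muln0.
rewrite mulnS addnC iotaD count_cat IH add0n /=.
have e : forall i, (3 * q + i + p) %% 3 = (i + p) %% 3.
  by move=> i; rewrite -addnA mulnC modnMDl.
have -> : 3 * q + p = 3 * q + 0 + p by lia.
have -> : (3 * q).+1 + p = 3 * q + 1 + p by lia.
have -> : (3 * q).+2 + p = 3 * q + 2 + p by lia.
rewrite !e; clear IH e.
case: p hp => [|[|[|p]]] //= _; case: j hj => [|[|[|j]]] //= _; lia.
Qed.

Lemma cyc3 (lab : nat -> nat) (s : seq nat) :
  cyclic3 lab (s ++ s) -> forall j, j < 3 -> 3 * count (fun x => lab x == j) s = size s.
Proof.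
case: s => [|a s']; first by [].
set s := a :: s' => -[p hp H] j hj.
have H0 := H 0 ltac:(rewrite size_cat /=; lia).
have Hn := H (size s) ltac:(rewrite size_cat /s /=; lia).
rewrite nth_cat ltnn subnn in Hn.
rewrite nth_cat /= in H0.
have hm : size s %% 3 = 0 by move: Hn; rewrite H0 /s /=; lia.
have em : map lab s = [seq (i + p) %% 3 | i <- iota 0 (size s)].
  apply: (@eq_from_nth _ 0); first by rewrite size_map size_map size_iota.
  move=> i; rewrite size_map => hi.
  rewrite (nth_map 0) // (nth_map 0) ?size_iota // nth_iota // add0n.
  by have := H i ltac:(rewrite size_cat; lia); rewrite nth_cat hi.
rewrite -(count_map lab (pred1 j)) em count_map.
have -> : size s = 3 * (size s %/ 3) by rewrite {1}(divn_eq (size s) 3) hm addn0 mulnC.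
by rewrite cnt_iota3.
Qed.

Lemma count_sub (P : pred nat) l r o A :
  count P (sub_seq l r o A) =
  count (fun x => P x && ((o < x) && (x <= o + (tree_size l + tree_size r).+1))) A.
Proof. by rewrite /sub_seq count_filter. Qed.

Lemma sub_cat l r o A : sub_seq l r o (A ++ A) = sub_seq l r o A ++ sub_seq l r o A.
Proof. by rewrite /sub_seq filter_cat. Qed.

Lemma F1 l r o A : count (fun x => x <= o + tree_size l) (sub_seq l r o A) = cI o (tree_size l) A.
Proof. rewrite count_sub /cI; apply: eq_count => x /=; lia. Qed.

Lemma F2 l r o A : count (fun x => ~~ (x <= o + tree_size l)) (sub_seq l r o A) =
  count_mem (o + tree_size l).+1 A + cI (o + tree_size l).+1 (tree_size r) A.
Proof.
rewrite -cI1; have -> : (o + tree_size l).+1 = (o + tree_size l + 1)%N by lia.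
rewrite -cI_split count_sub /cI; apply: eq_count => x /=; lia.
Qed.

Lemma F3 l r o A : count (fun x => (o + tree_size l).+1 < x) (sub_seq l r o A) =
  cI (o + tree_size l).+1 (tree_size r) A.
Proof. rewrite count_sub /cI; apply: eq_count => x /=; lia. Qed.

Lemma F4 l r o A : count (fun x => ~~ ((o + tree_size l).+1 < x)) (sub_seq l r o A) =
  cI o (tree_size l) A + count_mem (o + tree_size l).+1 A.
Proof.
rewrite -cI1 -cI_split count_sub /cI.
apply: eq_count => x /=; lia.
Qed.

Lemma node_strong l r o A : strong_node l r o (A ++ A) ->
  cI o (tree_size l) A = count_mem (o + tree_size l).+1 A + cI (o + tree_size l).+1 (tree_size r) A.
Proof.
rewrite /strong_node sub_cat map_cat => /alt_cnt.
by rewrite !count_map -(F1 l r o A) -(F2 l r o A).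
Qed.

Lemma node_wl l r o A : weak_left_node l r o (A ++ A) ->
  3 * cI o (tree_size l) A = 2 * size (sub_seq l r o A) /\
  3 * (count_mem (o + tree_size l).+1 A + cI (o + tree_size l).+1 (tree_size r) A) =
      size (sub_seq l r o A).
Proof.
case: l => [|ll lr] // [_]; rewrite sub_cat => /cyc3 H.
set l := N ll lr.
set s := sub_seq l r o A.
pose lab := fun x => if x <= o + tree_size ll then 0 else if x <= o + tree_size l then 1 else 2.
have H0 : 3 * count (fun x => lab x == 0) s = size s := H 0 isT.
have H1 : 3 * count (fun x => lab x == 1) s = size s := H 1 isT.
have H2 : 3 * count (fun x => lab x == 2) s = size s := H 2 isT.
have e1 := F1 l r o A; have e2 := F2 l r o A; rewrite -/s in e1 e2.
have c01 : count (fun x => x <= o + tree_size l) s =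
           count (fun x => lab x == 0) s + count (fun x => lab x == 1) s.
  rewrite (@count_split nat (fun x => x <= o + tree_size l) (fun x => x <= o + tree_size ll)).
  by congr (_ + _); apply: eq_count => x; rewrite /lab /l /=;
     case: leqP => h1; case: leqP => h2 //=; lia.
have c2 : count (fun x => ~~ (x <= o + tree_size l)) s = count (fun x => lab x == 2) s.
  by apply: eq_count => x; rewrite /lab /l /=; case: leqP => h1; case: leqP => h2 //=; lia.
lia.
Qed.

Lemma node_wr l r o A : weak_right_node l r o (A ++ A) ->
  3 * (cI o (tree_size l) A + count_mem (o + tree_size l).+1 A) = size (sub_seq l r o A) /\
  3 * cI (o + tree_size l).+1 (tree_size r) A = 2 * size (sub_seq l r o A).
Proof.
case: r => [|rl rr] // [_]; rewrite sub_cat => /cyc3 H.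
set r := N rl rr.
set s := sub_seq l r o A.
pose v := (o + tree_size l).+1.
pose lab := fun x => if x > v + (tree_size rl).+1 then 0 else if x > v then 1 else 2.
have H0 : 3 * count (fun x => lab x == 0) s = size s := H 0 isT.
have H1 : 3 * count (fun x => lab x == 1) s = size s := H 1 isT.
have H2 : 3 * count (fun x => lab x == 2) s = size s := H 2 isT.
have e3 := F3 l r o A; have e4 := F4 l r o A; rewrite -/s in e3 e4.
have c01 : count (fun x => (o + tree_size l).+1 < x) s =
           count (fun x => lab x == 0) s + count (fun x => lab x == 1) s.
  rewrite (@count_split nat (fun x => (o + tree_size l).+1 < x) (fun x => v + (tree_size rl).+1 < x)).
  by congr (_ + _); apply: eq_count => x; rewrite /lab /v /=;
     case: ltnP => h1; case: ltnP => h2 //=; lia.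
have c2 : count (fun x => ~~ ((o + tree_size l).+1 < x)) s = count (fun x => lab x == 2) s.
  by apply: eq_count => x; rewrite /lab /v /=; case: ltnP => h1; case: ltnP => h2 //=; lia.
lia.
Qed.

Lemma all_nodes_impl (P Q : tree -> tree -> nat -> Prop) t o :
  (forall l r o, P l r o -> Q l r o) -> all_nodes P t o -> all_nodes Q t o.
Proof. move=> h; elim: t o => //= l IHl r IHr o [a [b c]]; split; [exact: h|split; auto]. Qed.

Lemma all_nodes_and (P Q : tree -> tree -> nat -> Prop) t o :
  all_nodes P t o -> all_nodes Q t o -> all_nodes (fun l r o => P l r o /\ Q l r o) t o.
Proof.
elim: t o => //= l IHl r IHr o [a [b c]] [a' [b' c']]; split; [by split|split; auto].
Qed.

Lemma cI_N l r o Y : cI o (tree_size (N l r)) Y =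
  cI o (tree_size l) Y + count_mem (o + tree_size l).+1 Y + cI (o + tree_size l).+1 (tree_size r) Y.
Proof.
have -> : tree_size (N l r) = (tree_size l + 1 + tree_size r)%N by rewrite /=; lia.
by rewrite !cI_split cI1 addn1 addnS.
Qed.

Lemma size_sub l r o A : size (sub_seq l r o A) = cI o (tree_size (N l r)) A.
Proof. by rewrite /sub_seq size_filter. Qed.

Lemma cI_rep a n A m : cI a n (rep A m) = m * cI a n A.
Proof. exact: count_rep. Qed.

Lemma cm_rep v A m : count_mem v (rep A m) = m * count_mem v A.
Proof. exact: count_rep. Qed.

Lemma leaf_hyp T X : only_leaf_queries T X ->
  forall x, x \in X -> [|| leaf_key T 0 x, x <= 0 | 0 + tree_size T < x].
Proof. by move=> /allP h x /h ->. Qed.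

Lemma counts_mixed T X A m : X = rep A m -> 0 < m -> mixed_stable T (rep A 2) ->
  only_leaf_queries T X ->
  all_nodes (fun l r o => inner l r ->
    [/\ cI o (tree_size (N l r)) X <= 3 * cI o (tree_size l) X,
        cI o (tree_size (N l r)) X <= 3 * cI (o + tree_size l).+1 (tree_size r) X
      & count_mem (o + tree_size l).+1 X = 0]) T 0.
Proof.
move=> hX hm [_ hS] hL.
have hR := root_notin T 0 X (leaf_hyp T X hL).
move: (all_nodes_and _ _ _ _ hS hR); apply: all_nodes_impl => l r o [h1 h2] hin.
have z := h2 hin; move: (z); rewrite hX cm_rep => zA.
have zA0 : count_mem (o + tree_size l).+1 A = 0 by nia.
rewrite !cI_rep cI_N zA0 addn0 muln0.
move: (h1 hin); rewrite rep2 => -[/node_strong|[/node_wl|/node_wr]].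
- rewrite zA0 add0n => e; rewrite e; split => //; nia.
- rewrite size_sub cI_N zA0 addn0 add0n => -[e1 e2]; split => //; nia.
- rewrite size_sub cI_N zA0 addn0 => -[e1 e2]; split => //; nia.
Qed.

Lemma counts_strong T X A m : X = rep A m -> 0 < m -> strongly_stable T (rep A 2) ->
  only_leaf_queries T X ->
  all_nodes (fun l r o => inner l r ->
    cI o (tree_size l) X = cI (o + tree_size l).+1 (tree_size r) X
      /\ count_mem (o + tree_size l).+1 X = 0) T 0.
Proof.
move=> hX hm [_ hS] hL.
have hR := root_notin T 0 X (leaf_hyp T X hL).
move: (all_nodes_and _ _ _ _ hS hR); apply: all_nodes_impl => l r o [h1 h2] hin.
have z := h2 hin; move: (z); rewrite hX cm_rep => zA.
have zA0 : count_mem (o + tree_size l).+1 A = 0 by nia.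
split => //; rewrite !cI_rep.
by move: (h1 hin); rewrite rep2 => /node_strong; rewrite zA0 add0n => ->.
Qed.

Lemma size_rep A m : size (rep A m) = m * size A.
Proof. by rewrite -!count_predT count_rep. Qed.

Lemma total_cnt T X : only_leaf_queries T X -> cI 0 (tree_size T) X = size X.
Proof.
move=> /allP hL; apply/eqP; rewrite -all_count; apply/allP => x hx.
exact: leaf_range (hL x hx).
Qed.

Local Open Scope ring_scope.

Definition mass (n o : nat) (w : nat -> rat) : rat := \sum_(1 <= x < n.+1) w (o + x)%N.
Definition cost (t : tree) (o : nat) (w : nat -> rat) : rat :=
  \sum_(1 <= x < (tree_size t).+1) w (o + x)%N * (depth t x)%:R.

Lemma sum_split (F : nat -> rat) (a b : nat) :
  \sum_(1 <= x < (a + b).+1) F x = \sum_(1 <= x < a.+1) F x + \sum_(1 <= x < b.+1) F (a + x)%N.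
Proof.
elim: b => [|b IH]; first by rewrite addn0 [X in _ + X]big_geq // addr0.
rewrite addnS big_nat_recr //= IH [X in _ = _ + X]big_nat_recr //= addrA addnS.
by []. Qed.

Lemma mass_S n o w : mass n.+1 o w = mass n o w + w (o + n.+1)%N.
Proof. by rewrite /mass big_nat_recr. Qed.

Lemma mass_shift n o w : mass n.+1 o w = w o.+1 + mass n o.+1 w.
Proof.
rewrite /mass big_nat_recl // addn1; congr (_ + _).
by apply: eq_bigr => i _; rewrite addSnnS.
Qed.

Lemma mass_N l r o w : mass (tree_size (N l r)) o w =
  mass (tree_size l) o w + w (o + tree_size l).+1 + mass (tree_size r) (o + tree_size l).+1 w.
Proof.
rewrite /mass /= -addnS sum_split [X in _ + X = _]big_nat_recl // addrA.
congr (_ + _ + _); [congr w | apply: eq_bigr => i _; congr w]; lia.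
Qed.

Lemma mass_ge0 n o w : (forall x, 0 <= w x) -> 0 <= mass n o w.
Proof. by move=> h; apply: sumr_ge0 => i _. Qed.

Lemma cost_N l r o w : cost (N l r) o w =
  mass (tree_size l) o w + cost l o w +
  (mass (tree_size r) (o + tree_size l).+1 w + cost r (o + tree_size l).+1 w).
Proof.
rewrite /cost /mass /= -addnS sum_split; congr (_ + _).
  rewrite -big_split /=; apply: eq_big_nat => x /andP [h1 h2].
  rewrite /= ifF; last by lia.
  by rewrite h2 -addn1 natrD mulrDr mulr1 addrC.
rewrite -big_split /= big_nat_recl // /=.
have -> : (tree_size l + 1 == (tree_size l).+1) = true by lia.
rewrite mulr0 add0r; apply: eq_big_nat => x /andP [h1 h2].
rewrite ifF; last by lia.
rewrite ifF; last by lia.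
have -> : (tree_size l + x.+1 - (tree_size l).+1)%N = x by lia.
have -> : (o + (tree_size l + x.+1))%N = ((o + tree_size l).+1 + x)%N by lia.
by rewrite mulrS mulrDr mulr1.
Qed.

Lemma cost_E o w : cost E o w = 0.
Proof. by rewrite /cost big_geq. Qed.

Lemma cost_leaf o w : cost leaf o w = 0.
Proof. by rewrite cost_N !cost_E /mass !big_geq // !addr0. Qed.

Fixpoint addR (t : tree) : tree := if t is N l r then N l (addR r) else leaf.
Fixpoint addL (t : tree) : tree := if t is N l r then N (addL l) r else leaf.
Fixpoint rtrunk (S : tree) (K : nat) : tree :=
  if K is K'.+1 then N (rtrunk S K') S else addL S.
Fixpoint Tp (K r : nat) : tree :=
  if r is r'.+1 then N (addR (Tp K r')) (rtrunk (Tp K r') K) else leaf.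

Lemma size_addR t : tree_size (addR t) = (tree_size t).+1.
Proof. elim: t => //= l _ r ->; lia. Qed.
Lemma size_addL t : tree_size (addL t) = (tree_size t).+1.
Proof. elim: t => //= l -> r _; lia. Qed.
Lemma size_trunk T K : tree_size (trunk T K) = (K * (tree_size T).+1).+1.
Proof. elim: K => //= K ->; lia. Qed.
Lemma size_rtrunk S K : tree_size (rtrunk S K) = (K.+1 * (tree_size S).+1)%N.
Proof. elim: K => [|K IH] /=; first by rewrite size_addL; lia. rewrite IH; lia. Qed.
Lemma size_Tp K r : tree_size (Tp K r) = tree_size (krtree K.+2 r).
Proof.
elim: r => //= r IH; rewrite size_addR size_rtrunk size_trunk IH; lia.
Qed.

Lemma cost_addR t o w : w (o + (tree_size t).+1)%N = 0 -> cost (addR t) o w = cost t o w.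
Proof.
elim: t o => [|l _ r IH] o h; first by rewrite cost_leaf cost_E.
move: h => /= h.
have hw : w ((o + tree_size l).+1 + (tree_size r).+1)%N = 0 by rewrite -h; congr w; lia.
by rewrite /= !cost_N size_addR mass_S IH // hw addr0.
Qed.

Lemma cost_addL t o w : w o.+1 = 0 -> cost (addL t) o w = cost t o.+1 w.
Proof.
elim: t o => [|l IH r _] o h; first by rewrite cost_leaf cost_E.
rewrite /= !cost_N size_addL mass_shift IH // h add0r.
by have -> : (o + (tree_size l).+1)%N = (o.+1 + tree_size l)%N by lia.
Qed.

Lemma gainE0 T S o w : tree_size S = tree_size T -> w o.+2 = 0 ->
  cost (trunk T 1) o w - cost (rtrunk S 0) o.+1 w =
  w o.+1 + mass (tree_size T) o.+2 w + (cost T o.+2 w - cost S o.+2 w).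
Proof.
move=> hS h0 /=; rewrite cost_N cost_leaf cost_addL // /= addn1.
rewrite /mass big_nat1 addn1; ring.
Qed.

Lemma gainES T S K o w : tree_size S = tree_size T ->
  cost (trunk T K.+2) o w - cost (rtrunk S K.+1) o.+1 w =
  w o.+1 + (cost (trunk T K.+1) o w - cost (rtrunk S K) o.+1 w) +
  (cost T (o + tree_size (trunk T K.+1)).+1 w - cost S (o + tree_size (trunk T K.+1)).+1 w).
Proof.
move=> hS.
have e : tree_size (trunk T K.+1) = (tree_size (rtrunk S K)).+1.
  by rewrite size_trunk size_rtrunk hS.
rewrite [trunk T K.+2]/= [rtrunk S K.+1]/= !cost_N hS e mass_shift.
have -> : (o.+1 + tree_size (rtrunk S K)).+1 = (o + (tree_size (rtrunk S K)).+1).+1 by lia.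
ring.
Qed.

Lemma gainTop T S K o w : tree_size S = tree_size T -> w (o + tree_size T).+1 = 0 ->
  cost (N T (trunk T K.+1)) o w - cost (N (addR S) (rtrunk S K)) o w =
  (cost T o w - cost S o w) + w (o + tree_size T).+2 +
  (cost (trunk T K.+1) (o + tree_size T).+1 w - cost (rtrunk S K) (o + tree_size T).+2 w).
Proof.
move=> hS h0.
have e : tree_size (trunk T K.+1) = (tree_size (rtrunk S K)).+1.
  by rewrite size_trunk size_rtrunk hS.
rewrite !cost_N size_addR hS cost_addR; last by rewrite hS addnS.
rewrite mass_S addnS h0 addr0 e mass_shift; ring.
Qed.

Definition Q1 (w : nat -> rat) (l r : tree) (o : nat) : Prop :=
  inner l r -> [/\ mass (tree_size (N l r)) o w <= 3%:R * mass (tree_size l) o w,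
                   mass (tree_size (N l r)) o w <= 3%:R * mass (tree_size r) (o + tree_size l).+1 w
                 & w (o + tree_size l).+1 = 0].

Lemma mass1 o w : mass 1 o w = w o.+1.
Proof. by rewrite /mass big_nat1 addn1. Qed.

Lemma nonempty_kr k r : nonempty (krtree k r).
Proof. by case: r. Qed.

Lemma trunk1 (T S : tree) (g : rat) w : (forall x, 0 <= w x) -> 0 <= g ->
  nonempty T -> tree_size S = tree_size T ->
  (forall o, all_nodes (Q1 w) T o -> g * mass (tree_size T) o w <= cost T o w - cost S o w) ->
  forall K o, all_nodes (Q1 w) (trunk T K.+1) o ->
   (K.+1)%:R * w o.+1 + w o.+1 / 3%:R + g * (mass (tree_size (trunk T K.+1)) o w - w o.+1)
       <= cost (trunk T K.+1) o w - cost (rtrunk S K) o.+1 w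
   /\ mass (tree_size (trunk T K.+1)) o w <= 3%:R ^+ K.+1 * w o.+1.
Proof.
move=> w0 g0 neT hS HG; elim=> [|K IH] o.
- rewrite [trunk T 1]/= => -[hQ [_ hT]].
  have [h1 h2 h3] := hQ neT.
  move: h1 h2 h3 hT; rewrite mass_N /= mass1 addn1 => h1 h2 h3 hT.
  rewrite gainE0 // expr1.
  have := HG _ hT; have := mass_ge0 (tree_size T) o.+2 w w0.
  move: h1 h2; rewrite h3 /=.
  set a := w o.+1; set c := mass _ _ _; set G := (cost T _ _ - _).
  move=> h1 h2 hc hG; split; [nra | lra].
- rewrite [trunk T K.+2]/= => -[hQ [hK hT]].
  have [h1 h2 h3] := hQ neT.
  have [IH1 IH2] := IH _ hK.
  rewrite gainES // mass_N h3.
  move: h1 h2; rewrite mass_N h3 => h1 h2.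
  have := HG _ hT; have := mass_ge0 (tree_size T) (o + tree_size (trunk T K.+1)).+1 w w0.
  have hk : (K.+2)%:R = (K.+1)%:R + 1 :> rat by rewrite -addn1 natrD.
  rewrite hk exprS.
  move: IH1 IH2 h1 h2.
  set a := w o.+1; set M := mass (tree_size (trunk T K.+1)) o w.
  set c := mass (tree_size T) _ _; set G := (cost T _ _ - _); set E := (cost _ _ _ - _).
  set p := 3%:R ^+ K.+1.
  move=> IH1 IH2 h1 h2 hc hG; split; [nra | nra].
Qed.

Lemma kr_S K r : krtree K.+2 r.+1 = N (krtree K.+2 r) (trunk (krtree K.+2 r) K.+1).
Proof. by []. Qed.

Lemma step1 K r (w : nat -> rat) (g : rat) : (forall x, 0 <= w x) -> 0 <= g -> g <= (K.+2)%:R ->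
  (forall o, all_nodes (Q1 w) (krtree K.+2 r) o ->
     g * mass (tree_size (krtree K.+2 r)) o w <= cost (krtree K.+2 r) o w - cost (Tp K r) o w) ->
  forall o, all_nodes (Q1 w) (krtree K.+2 r.+1) o ->
   g * mass (tree_size (krtree K.+2 r.+1)) o w
     + ((K.+2)%:R - g) * w (o + tree_size (krtree K.+2 r)).+2
     + w (o + tree_size (krtree K.+2 r)).+2 / 3%:R
     <= cost (krtree K.+2 r.+1) o w - cost (Tp K r.+1) o w
   /\ mass (tree_size (krtree K.+2 r.+1)) o w <= 3%:R ^+ K.+2 * w (o + tree_size (krtree K.+2 r)).+2.
Proof.
move=> w0 g0 gk HG o.
rewrite kr_S [Tp K r.+1]/= => -[hQ [hA hT]].
have neT := nonempty_kr K.+2 r.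
have [h1 h2 h3] := hQ ltac:(by rewrite /inner neT).
have [E1 E2] := trunk1 (krtree K.+2 r) (Tp K r) g w w0 g0 neT (size_Tp K r) HG K _ hT.
rewrite gainTop ?size_Tp // mass_N h3.
move: h1 h2; rewrite mass_N h3 => h1 h2.
have := HG _ hA.
have hk : (K.+2)%:R = (K.+1)%:R + 1 :> rat by rewrite -addn1 natrD.
rewrite hk exprS.
move: E1 E2 h1 h2.
set T := krtree K.+2 r.
set a := w (o + tree_size T).+2; set M := mass (tree_size (trunk T K.+1)) _ w.
set c := mass (tree_size T) o w; set G := (cost T _ _ - _); set E := (cost _ _ _ - _).
set p := 3%:R ^+ K.+1.
move=> E1 E2 h1 h2 hG; split; [nra | nra].
Qed.

Lemma L1 K (w : nat -> rat) : (forall x, 0 <= w x) -> forall r o,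
  all_nodes (Q1 w) (krtree K.+2 r) o ->
  (K.+2)%:R * (1 - (1 - (3%:R ^+ K.+2)^-1) ^+ r) * mass (tree_size (krtree K.+2 r)) o w
   <= cost (krtree K.+2 r) o w - cost (Tp K r) o w.
Proof.
move=> w0; elim=> [|r IH] o.
  by move=> _; rewrite /= !cost_leaf expr0 subrr mulr0 mul0r subrr.
move=> hN.
set q := 3%:R ^+ K.+2 : rat.
have q1 : 1 <= q by rewrite exprn_ege1 // ler1n.
have q0 : 0 < q by apply: lt_le_trans q1.
set i := q^-1.
have i0 : 0 < i by rewrite invr_gt0.
have i1 : i <= 1 by rewrite invr_le1 // unitfE gt_eqF.
set al := 1 - i.
have al0 : 0 <= al by rewrite subr_ge0.
have al1 : al <= 1 by rewrite lerBlDr lerDl ltW.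
set z := al ^+ r.
have z0 : 0 <= z by rewrite exprn_ge0.
have z1 : z <= 1 by rewrite exprn_ile1.
set k := (K.+2)%:R : rat.
have k0 : 0 <= k by rewrite ler0n.
have g0 : 0 <= k * (1 - z) by rewrite mulr_ge0 // subr_ge0.
have gk : k * (1 - z) <= k by rewrite ler_piMr // lerBlDr lerDl.
have [S1 S2] := step1 K r w (k * (1 - z)) w0 g0 gk IH o hN.
rewrite exprSr -/z.
move: S1 S2; rewrite -/q -/k.
set M := mass _ o w; set a := w _; set G := (cost _ _ _ - _).
move=> S1 S2.
have a0 : 0 <= a by apply: w0.
have iM : i * M <= a.
  by rewrite -[a](mulKf (negbT (gt_eqF q0))) -/i ler_wpM2l // ltW.
have kz : (k * z) * (i * M) <= (k * z) * a by rewrite ler_wpM2l // mulr_ge0.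
rewrite /al; nra.
Qed.

Definition Q2 (w : nat -> rat) (l r : tree) (o : nat) : Prop :=
  inner l r -> mass (tree_size l) o w = mass (tree_size r) (o + tree_size l).+1 w
               /\ w (o + tree_size l).+1 = 0.

Lemma trunk2 (T S : tree) (g : rat) w :
  nonempty T -> tree_size S = tree_size T ->
  (forall o, all_nodes (Q2 w) T o -> cost T o w - cost S o w = g * mass (tree_size T) o w) ->
  forall K o, all_nodes (Q2 w) (trunk T K.+1) o ->
   w o.+1 = (2%:R ^+ K.+1)^-1 * mass (tree_size (trunk T K.+1)) o w /\
   cost (trunk T K.+1) o w - cost (rtrunk S K) o.+1 w =
     (K.+2)%:R * (2%:R ^+ K.+1)^-1 * mass (tree_size (trunk T K.+1)) o w
     + g * (1 - (2%:R ^+ K.+1)^-1) * mass (tree_size (trunk T K.+1)) o w.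
Proof.
move=> neT hS HG; elim=> [|K IH] o.
- rewrite [trunk T 1]/= => -[hQ [_ hT]].
  have [h1 h3] := hQ neT.
  have e1 : mass (tree_size leaf) o w = w o.+1 := mass1 o w.
  have e3 : (o + tree_size leaf).+1 = o.+2 by rewrite addn1.
  rewrite e1 e3 in h1 h3 hT.
  rewrite gainE0 //; change (trunk T 1) with (N leaf T).
  rewrite mass_N e1 e3 h3 HG // -h1 expr1.
  by split; field.
- rewrite [trunk T K.+2]/= => -[hQ [hK hT]].
  have [h1 h3] := hQ neT.
  have [IH1 IH2] := IH _ hK.
  rewrite gainES // mass_N h3 HG // IH1 IH2 -h1.
  change (N (trunk T K) T) with (trunk T K.+1).
  have eb : (2%:R ^+ K.+2)^-1 = 2%:R^-1 * (2%:R ^+ K.+1)^-1 :> rat by rewrite exprS invfM.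
  rewrite eb.
  set b := (2%:R ^+ K.+1)^-1.
  set M := mass (tree_size (trunk T K.+1)) o w.
  by split; field.
Qed.

Lemma L2 K (w : nat -> rat) : forall r o,
  all_nodes (Q2 w) (krtree K.+2 r) o ->
  cost (krtree K.+2 r) o w - cost (Tp K r) o w =
  (K.+3)%:R * (1 - (1 - (2%:R ^+ K.+2)^-1) ^+ r) * mass (tree_size (krtree K.+2 r)) o w.
Proof.
elim=> [|r IH] o.
  by move=> _; rewrite /= !cost_leaf expr0 !subrr mulr0 mul0r.
rewrite kr_S [Tp K r.+1]/= => -[hQ [hA hT]].
have neT := nonempty_kr K.+2 r.
have [h1 h3] := hQ ltac:(by rewrite /inner neT).
have [E1 E2] := trunk2 (krtree K.+2 r) (Tp K r) _ w neT (size_Tp K r) IH K _ hT.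
have eb : (2%:R ^+ K.+2)^-1 = 2%:R^-1 * (2%:R ^+ K.+1)^-1 :> rat by rewrite exprS invfM.
rewrite gainTop ?size_Tp // mass_N h3 IH // E2 E1 h1 eb (exprSr (1 - 2%:R^-1 * (2%:R ^+ K.+1)^-1) r).
set b := (2%:R ^+ K.+1)^-1.
set M := mass (tree_size (trunk _ K.+1)) _ w.
set z := (1 - 2%:R^-1 * b) ^+ r.
by field.
Qed.

Lemma sum_cnt n o (X : seq nat) :
  \sum_(1 <= x < n.+1) ((count_mem (o + x)%N X)%:R : rat) = (cI o n X)%:R.
Proof.
elim: n => [|n IH].
  rewrite big_geq // /cI (@eq_count _ _ pred0) ?count_pred0 // => y /=; lia.
rewrite big_nat_recr //= IH -natrD; congr (_%:R).
by rewrite -addn1 cI_split cI1 addn1 addnS.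
Qed.

Lemma massF n o X : mass n o (freq X) = (cI o n X)%:R / (size X)%:R.
Proof. by rewrite /mass /freq -mulr_suml sum_cnt. Qed.

Lemma freq_ge0 X x : 0 <= freq X x.
Proof. by rewrite /freq divr_ge0. Qed.

Lemma Q1_of X l r o :
  (inner l r -> [/\ (cI o (tree_size (N l r)) X <= 3 * cI o (tree_size l) X)%N,
        (cI o (tree_size (N l r)) X <= 3 * cI (o + tree_size l).+1 (tree_size r) X)%N
      & count_mem (o + tree_size l).+1 X = 0%N]) -> Q1 (freq X) l r o.
Proof.
move=> h /h [a b c]; rewrite !massF; split.
- by rewrite mulrA -natrM ler_wpM2r ?invr_ge0 ?ler0n // ler_nat.
- by rewrite mulrA -natrM ler_wpM2r ?invr_ge0 ?ler0n // ler_nat.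
- by rewrite /freq c mul0r.
Qed.

Lemma Q2_of X l r o :
  (inner l r -> cI o (tree_size l) X = cI (o + tree_size l).+1 (tree_size r) X
      /\ count_mem (o + tree_size l).+1 X = 0%N) -> Q2 (freq X) l r o.
Proof.
move=> h /h [a c]; rewrite !massF; split; first by rewrite a.
by rewrite /freq c mul0r.
Qed.

Lemma avg_eq T T' X : tree_size T' = tree_size T ->
  avg_promotion T T' X = cost T 0 (freq X) - cost T' 0 (freq X).
Proof.
move=> h; rewrite /avg_promotion /cost h -sumrB; apply: eq_bigr => x _.
by rewrite mulrBr add0n.
Qed.

Lemma L1S K (w : nat -> rat) : (forall x, 0 <= w x) -> forall r o,
  all_nodes (Q1 w) (krtree K.+2 r.+1) o ->
  (K.+2)%:R * (1 - (1 - (3%:R ^+ K.+2)^-1) ^+ r.+1) * mass (tree_size (krtree K.+2 r.+1)) o w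
   + w (o + tree_size (krtree K.+2 r)).+2 / 3%:R
   <= cost (krtree K.+2 r.+1) o w - cost (Tp K r.+1) o w
  /\ mass (tree_size (krtree K.+2 r.+1)) o w <= 3%:R ^+ K.+2 * w (o + tree_size (krtree K.+2 r)).+2.
Proof.
move=> w0 r o hN.
have IH := L1 K w w0 r.
set q := 3%:R ^+ K.+2 : rat.
have q1 : 1 <= q by rewrite exprn_ege1 // ler1n.
have q0 : 0 < q by apply: lt_le_trans q1.
set i := q^-1.
have i0 : 0 < i by rewrite invr_gt0.
have i1 : i <= 1 by rewrite invr_le1 // unitfE gt_eqF.
set al := 1 - i.
have al0 : 0 <= al by rewrite subr_ge0.
have al1 : al <= 1 by rewrite lerBlDr lerDl ltW.
set z := al ^+ r.
have z0 : 0 <= z by rewrite exprn_ge0.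
have z1 : z <= 1 by rewrite exprn_ile1.
set k := (K.+2)%:R : rat.
have k0 : 0 <= k by rewrite ler0n.
have g0 : 0 <= k * (1 - z) by rewrite mulr_ge0 // subr_ge0.
have gk : k * (1 - z) <= k by rewrite ler_piMr // lerBlDr lerDl.
have [S1 S2] := step1 K r w (k * (1 - z)) w0 g0 gk IH o hN.
rewrite exprSr -/z.
move: S1 S2; rewrite -/q -/k.
set M := mass _ o w; set a := w _; set G := (cost _ _ _ - _).
move=> S1 S2; split => //.
have a0 : 0 <= a by apply: w0.
have iM : i * M <= a.
  by rewrite -[a](mulKf (negbT (gt_eqF q0))) -/i ler_wpM2l // ltW.
have kz : (k * z) * (i * M) <= (k * z) * a by rewrite ler_wpM2l // mulr_ge0.
rewrite /al; nra.
Qed.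

Theorem lemma8 (k r : nat) (X : seq nat) :
  (2 <= k)%N -> (1 <= r)%N ->
  (mixed_stable (krtree k r) X ->
   whole_multiple_of_atomic (mixed_stable (krtree k r)) X ->
   exists T' : tree, tree_size T' = tree_size (krtree k r) /\
     (k%:R * (1 - (1 - ((3%:R : rat) ^+ k)^-1) ^+ r) < avg_promotion (krtree k r) T' X))
  /\
  (strongly_stable (krtree k r) X ->
   whole_multiple_of_atomic (strongly_stable (krtree k r)) X ->
   exists (T' : tree) (delta : rat), tree_size T' = tree_size (krtree k r) /\
     [/\ avg_promotion (krtree k r) T' X
           = (k.+1)%:R * (1 - (1 - ((2%:R : rat) ^+ k)^-1) ^+ r) + delta,
         0 <= delta &
         delta < (1 - ((2%:R : rat) ^+ k)^-1) ^+ r]).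
Proof.
move=> hk hr.
have [K ->] : exists K, k = K.+2 by exists (k - 2)%N; lia.
have [r' ->] : exists r', r = r'.+1 by exists (r - 1)%N; lia.
split.
- move=> hM [A [m [[hA hrep _ _] hm hX]]].
  exists (Tp K r'.+1); split; first exact: size_Tp.
  have hsX : (0 < size X)%N by rewrite hX size_rep muln_gt0 hm hA.
  have HQ : all_nodes (Q1 (freq X)) (krtree K.+2 r'.+1) 0.
    move: (counts_mixed _ _ _ _ hX hm (hrep 2%N isT) hM.1).
    by apply: all_nodes_impl => l r0 o; apply: Q1_of.
  have [S1 S2] := L1S K (freq X) (freq_ge0 X) r' 0 HQ.
  have HL := hM.1.
  have M1 : mass (tree_size (krtree K.+2 r'.+1)) 0 (freq X) = 1.
    by rewrite massF (total_cnt _ _ HL) divff // pnatr_eq0 -lt0n.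
  rewrite avg_eq ?size_Tp //.
  move: S1 S2; rewrite M1 mulr1.
  set a := freq X _ => S1 S2.
  have a0 : 0 <= a by apply: freq_ge0.
  have : 0 < 3%:R ^+ K.+2 * a by lra.
  rewrite pmulr_rgt0 ?exprn_gt0 // => apos.
  lra.
- move=> hS [A [m [[hA hrep _ _] hm hX]]].
  exists (Tp K r'.+1), 0; split; first exact: size_Tp.
  have hsX : (0 < size X)%N by rewrite hX size_rep muln_gt0 hm hA.
  have HQ : all_nodes (Q2 (freq X)) (krtree K.+2 r'.+1) 0.
    move: (counts_strong _ _ _ _ hX hm (hrep 2%N isT) hS.1).
    by apply: all_nodes_impl => l r0 o; apply: Q2_of.
  have e := L2 K (freq X) r'.+1 0 HQ.
  have HL := hS.1.
  have M1 : mass (tree_size (krtree K.+2 r'.+1)) 0 (freq X) = 1.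
    by rewrite massF (total_cnt _ _ HL) divff // pnatr_eq0 -lt0n.
  rewrite avg_eq ?size_Tp // e M1 mulr1 addr0; split => //.
  apply: exprn_gt0; rewrite subr_gt0 invf_lt1 ?exprn_gt0 //.
  by rewrite exprS (@lt_le_trans _ _ 2%:R) ?ltr1n // ler_peMr ?ler0n // exprn_ege1 // ler1n.
Qed.
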